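(* Let $\mathscr{A}\in\mathbb{R}^{n_1\times n_2\times n_3}$, $\mathscr{B}\in\mathbb{R}^{n_1\times s\times n_3}$, and suppose $k$ steps of the tensor tubal-global Golub–Kahan algorithm described in the context have been run (without breakdown). Starting from the zero initial guess, for $\mathscr{Y}\in\mathbb{R}^{k\times1\times n_3}$ let $\mathscr{X}_k=\mathbb{V}_k\star(\mathscr{Y}\circledast\mathscr{I}_{ssn_3})$. Then $$\|\mathscr{B}-\mathscr{A}\star\mathscr{X}_k\|_F=\|\mathscr{E}_1^{(k+1)}\star\mathbf{a}_1-\widetilde{\mathscr{C}}_k\star\mathscr{Y}\|_{T_{\ell_2}}.$$
   Context: All tensors are real third-order arrays; $\|\cdot\|_F$ is the Frobenius norm of the array. $\widehat{\mathscr{A}}=\mathscr{A}\times_3F_{n_3}$ denotes the tensor obtained by applying the discrete Fourier transform ($F_{n_3}$ with entries $\omega^{(i-1)(j-1)}$, $\omega=e^{-2\pi\mathrm{i}/n_3}$) to each tube; its frontal slices $\hat A^{(k)}$ are the Fourier slices. T-product: $\mathscr{A}\star\mathscr{B}$ has Fourier slices $\hat A^{(k)}\hat B^{(k)}$. Transpose $\mathscr{A}^T$: transpose each frontal slice and reverse the order of frontal slices $2,\dots,n_3$. $\mathscr{I}_{ssn_3}$: first frontal slice $I_s$, others zero. T-Kronecker product $\mathscr{A}\circledast\mathscr{B}$: Fourier slices $\hat A^{(k)}\otimes\hat B^{(k)}$. A tube is an element of $\mathbb{R}^{1\times1\times n_3}$; $\mathbf{e}$ has entries $(1,0,\dots,0)$,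 $\mathbf{o}$ is the zero tube. For a tube $\mathbf{a}$, $\mathbf{a}\divideontimes\mathscr{W}$ has $(i,j)$ tube $\mathbf{a}\star\mathscr{W}(i,j,:)$. Normalization of $\mathscr{W}$: $\mathbf{a}$ is the tube with $k$-th Fourier coefficient $\|\hat W^{(k)}\|_F$ (breakdown if one is zero) and $\mathscr{Q}$ has Fourier slices $\hat W^{(k)}/\|\hat W^{(k)}\|_F$; output $[\mathscr{Q},\mathbf{a}]$. Tubal-global Golub–Kahan algorithm: $\mathscr{V}_0=0\in\mathbb{R}^{n_2\times s\times n_3}$, $[\mathscr{U}_1,\mathbf{a}_1]=\mathrm{Normalization}(\mathscr{B})$; for $j=1,\dots,k$: $\widetilde{\mathscr{V}}=\mathscr{A}^T\star\mathscr{U}_j-\mathbf{a}_j\divideontimes\mathscr{V}_{j-1}$, $[\mathscr{V}_j,\mathbf{b}_j]=\mathrm{Normalization}(\widetilde{\mathscr{V}})$, $\widetilde{\mathscr{U}}=\mathscr{A}\star\mathscr{V}_j-\mathbf{b}_j\divideontimes\mathscr{U}_j$, $[\mathscr{U}_{j+1},\mathbf{a}_{j+1}]=\mathrm{Normalization}(\widetilde{\mathscr{U}})$. Notation: $\mathbb{V}_k=[\mathscr{V}_1,\dots,\mathscr{V}_k]\in\mathbb{R}^{n_2\times ks\times n_3}$ (concatenation along mode 2). $\widetilde{\mathscr{C}}_k\in\mathbb{R}^{(k+1)\times k\times n_3}$ is the bidiagonal tensor whose $(j,j)$ tube is $\mathbf{b}_j$, whose $(j+1,j)$ tube is $\mathbf{a}_{j+1}$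 ($j=1,\dots,k$), and other tubes $\mathbf{o}$. $\mathscr{E}_1^{(k+1)}=[\mathbf{e};\mathbf{o};\dots;\mathbf{o}]\in\mathbb{R}^{(k+1)\times1\times n_3}$. T-$\ell_2$ norm of $\mathscr{Y}\in\mathbb{R}^{p\times1\times n_3}$: $\|\mathscr{Y}\|_{T_{\ell_2}}=\frac{1}{\sqrt{n_3}}\big(\sum_{k=1}^{n_3}\|\hat Y^{(k)}\|_2^2\big)^{1/2}$. *)

(* Defs.v *)
From HB Require Import structures.
From mathcomp Require Import all_boot all_order all_algebra.
From mathcomp Require Import complex mxtens.
From mathcomp Require Import reals trigo.
Set Implicit Arguments. Unset Strict Implicit. Unset Printing Implicit Defensive.
Import Order.TTheory GRing.Theory Num.Theory.
Local Open Scope ring_scope.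
Local Open Scope complex_scope.

Section Tensors.
Variable R : realType.
Local Notation C := R[i].

(* third-order array m x n x p, stored by frontal slices *)
Definition tensor (T : Type) (m n p : nat) := 'I_p -> 'M[T]_(m, n).

Definition tcplx m n p (A : tensor R m n p) : tensor C m n p :=
  fun l => map_mx (fun x : R => x%:C) (A l).

Definition omega (p : nat) : C :=
  (cos (2 * pi / p%:R)) +i* (- sin (2 * pi / p%:R)).

Definition dft m n p (A : tensor C m n p) : tensor C m n p :=
  fun k => \sum_(j < p) (omega p ^+ (k * j)) *: A j.

Definition idft m n p (H : tensor C m n p) : tensor C m n p :=
  fun j => (p%:R^-1 : C) *: \sum_(k < p) ((omega p)^-1 ^+ (k * j)) *: H k.

Definition tprod m n q p (A : tensor C m n p) (B : tensor C n q p)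
  : tensor C m q p := idft (fun k => dft A k *m dft B k).

(* index reversal of frontal slices 2..p (0-based: j |-> (p - j) mod p) *)
Definition rev_slice p (j : 'I_p) : 'I_p :=
  Ordinal (ltn_pmod (p - j) (leq_ltn_trans (leq0n j) (ltn_ord j))).

Definition ttr m n p (A : tensor C m n p) : tensor C n m p :=
  fun j => (A (rev_slice j))^T.

Definition tid s p : tensor C s s p := fun l => if val l == 0%N then 1%:M else 0.

Definition tkron m1 n1 m2 n2 p (A : tensor C m1 n1 p) (B : tensor C m2 n2 p)
  : tensor C (m1 * m2) (n1 * n2) p :=
  idft (fun k => tensmx (dft A k) (dft B k)).

Definition tube_e p : tensor C 1 1 p := fun l => if val l == 0%N then 1 else 0.

Definition tube_of m n p (W : tensor C m n p) (i : 'I_m) (j : 'I_n)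
  : tensor C 1 1 p := fun l => (W l i j)%:M.

Definition tscale m n p (a : tensor C 1 1 p) (W : tensor C m n p)
  : tensor C m n p :=
  fun l => \matrix_(i, j) (tprod a (tube_of W i j) l 0 0).

Definition abs2 (z : C) : R := (@complex.Re R z) ^+ 2 + (@complex.Im R z) ^+ 2.
Definition frobc m n (M : 'M[C]_(m, n)) : R :=
  Num.sqrt (\sum_(i < m) \sum_(j < n) abs2 (M i j)).

Definition tfrob m n p (T : tensor C m n p) : R :=
  Num.sqrt (\sum_(l < p) \sum_(i < m) \sum_(j < n) abs2 (T l i j)).

Definition tl2 q p (Y : tensor C q 1 p) : R :=
  (Num.sqrt (p%:R))^-1 * Num.sqrt (\sum_(k < p) (frobc (dft Y k)) ^+ 2).

Definition norm_tube m n p (W : tensor C m n p) : tensor C 1 1 p :=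
  idft (fun k => ((frobc (dft W k))%:C)%:M).
Definition norm_Q m n p (W : tensor C m n p) : tensor C m n p :=
  idft (fun k => ((frobc (dft W k))^-1)%:C *: dft W k).

Definition taddsub m n p (X Y : tensor C m n p) : tensor C m n p :=
  fun l => X l - Y l.

(* Tubal-global Golub--Kahan. State after step j (j >= 0):
   (U_{j+1}, a_{j+1}, V_j, b_j); at j = 0, b_0 is an unused zero tube. *)
Record gk_state n1 n2 s p := GKState {
  gkU : tensor C n1 s p; gka : tensor C 1 1 p;
  gkV : tensor C n2 s p; gkb : tensor C 1 1 p }.

Section GK.
Variables (n1 n2 n3 s : nat).
Variables (A : tensor C n1 n2 n3) (B : tensor C n1 s n3).

(* V~ computed at step j from the state after step j-1 *)
Definition gk_Vt (st : gk_state n1 n2 s n3) : tensor C n2 s n3 :=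
  taddsub (tprod (ttr A) (gkU st)) (tscale (gka st) (gkV st)).
Definition gk_Ut (st : gk_state n1 n2 s n3) : tensor C n1 s n3 :=
  let V := norm_Q (gk_Vt st) in let b := norm_tube (gk_Vt st) in
  taddsub (tprod A V) (tscale b (gkU st)).

Definition gk_step (st : gk_state n1 n2 s n3) : gk_state n1 n2 s n3 :=
  let V := norm_Q (gk_Vt st) in let b := norm_tube (gk_Vt st) in
  let Ut := gk_Ut st in
  GKState (norm_Q Ut) (norm_tube Ut) V b.

Fixpoint gk (j : nat) : gk_state n1 n2 s n3 :=
  match j with
  | 0%N => GKState (norm_Q B) (norm_tube B) (fun _ => 0) (fun _ => 0)
  | j'.+1 => gk_step (gk j')
  end.

(* paper indexing, j >= 1 *)
Definition GK_U j := gkU (gk j.-1).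
Definition GK_a j := gka (gk j.-1).
Definition GK_V j := gkV (gk j).
Definition GK_b j := gkb (gk j).

Definition GK_Vtilde j := gk_Vt (gk j.-1).
Definition GK_Utilde j := gk_Ut (gk j.-1).

Definition gk_no_breakdown (k : nat) : Prop :=
  (forall l, frobc (dft B l) != 0) /\
  (forall j, (1 <= j <= k)%N -> forall l,
     frobc (dft (GK_Vtilde j) l) != 0 /\ frobc (dft (GK_Utilde j) l) != 0).

(* V_k = [V_1, ..., V_k] concatenated along mode 2; column (j,a) at j*s+a *)
Definition GK_Vcat k : tensor C n2 (k * s) n3 :=
  fun l => \matrix_(r, c) (GK_V (mxtens_unindex c).1.+1 l r (mxtens_unindex c).2).

(* C~_k : (k+1) x k bidiagonal tensor (0-based indices) *)
Definition GK_Ctilde k : tensor C k.+1 k n3 :=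
  fun l => \matrix_(i, j)
    (if val i == val j then GK_b j.+1 l 0 0
     else if val i == j.+1 then GK_a j.+2 l 0 0 else 0).

Definition E1 k : tensor C k.+1 1 n3 :=
  fun l => \matrix_(i, j) (if val i == 0%N then tube_e l 0 0 else 0).
End GK.

Definition tens_cast m n m' n' p (em : m = m') (en : n = n') (T : tensor C m n p)
  : tensor C m' n' p := fun l => castmx (em, en) (T l).

End Tensors.
Arguments tid {R} s {p}.
Arguments E1 {R n3} k.
Arguments tube_e {R p}.

(* Main.v *)
Require Import Defs.
From HB Require Import structures.
From mathcomp Require Import all_boot all_order all_algebra.
From mathcomp Require Import complex mxtens.
From mathcomp Require Import reals trigo.
From mathcomp Require Import ring lra.
Import Order.TTheory GRing.Theory Num.Theory.
Local Open Scope ring_scope.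
From mathcomp Require Import zify.
Set Implicit Arguments. Unset Strict Implicit. Unset Printing Implicit Defensive.

Section Roots.
Variable R : realType.
Local Notation C := R[i].
Local Open Scope complex_scope.

Lemma mulc_def (a b c d : R) : (a +i* b) * (c +i* d) = (a * c - b * d) +i* (a * d + b * c) :> C.
Proof. by []. Qed.

Lemma omegaX p r : omega R p ^+ r =
  (cos (r%:R * (2 * pi / p%:R))) +i* (- sin (r%:R * (2 * pi / p%:R))).
Proof.
elim: r => [|r IH]; first by rewrite expr0 mul0r cos0 sin0 oppr0.
rewrite exprSr IH /omega mulc_def; set t := (2 * pi / p%:R).
rewrite -[r.+1]addn1 natrD (mulrDl _ _ t) mul1r cosD sinD; congr (_ +i* _); ring.
Qed.

Lemma cos_lt1 (x : R) : 0 < x < pi *+ 2 -> cos x < 1.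
Proof.
move=> /andP[x0 x2].
have pi0 : 0 < pi :> R := pi_gt0 R.
case: (lerP x pi) => xpi.
  rewrite -cos0; rewrite ltr_cos //; rewrite in_itv /=; apply/andP; split => //; lra.
have -> : x = pi *+ 2 - (pi *+ 2 - x) by ring.
rewrite cosB cos2pi sin2pi mul1r mul0r addr0 -cos0.
rewrite ltr_cos ?in_itv /=; try (apply/andP; split); lra.
Qed.

Lemma omegap p : (0 < p)%N -> omega R p ^+ p = 1.
Proof.
move=> p0; rewrite omegaX mulrCA divff ?pnatr_eq0 -?lt0n // mulr1.
have -> : 2 * pi = pi *+ 2 :> R by rewrite mulr_natl.
by rewrite cos2pi sin2pi oppr0.
Qed.

Lemma omegaX_neq1 p r : (0 < r < p)%N -> omega R p ^+ r != 1.
Proof.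
move=> /andP[r0 rp]; rewrite omegaX; apply/negP => /eqP [h _]; move: h; apply/eqP.
rewrite lt_eqF // cos_lt1 //.
have pi0 : 0 < pi :> R := pi_gt0 R.
have p0 : 0 < p%:R :> R by rewrite ltr0n; apply: leq_trans rp.
have r0' : 0 < r%:R :> R by rewrite ltr0n.
have rp' : r%:R < p%:R :> R by rewrite ltr_nat.
apply/andP; split.
  by rewrite mulr_gt0 // mulr_gt0 ?invr_gt0 // mulr_gt0.
have e : r%:R * (2 * pi / p%:R) = (r%:R / p%:R) * (pi *+ 2) :> R.
  by rewrite -mulr_natl; ring.
have h : r%:R / p%:R < 1 :> R by rewrite ltr_pdivrMr // mul1r.
rewrite e -[ltRHS]mul1r ltr_pM2r //; lra.
Qed.

Lemma omega_mod p n : (0 < p)%N -> omega R p ^+ n = omega R p ^+ (n %% p).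
Proof.
move=> p0; rewrite {1}(divn_eq n p) exprD mulnC exprM omegap // expr1n mul1r //.
Qed.

Lemma sum_omega p m : (0 < p)%N ->
  \sum_(j < p) (omega R p ^+ m) ^+ j = if (p %| m)%N then p%:R else 0.
Proof.
move=> p0; case: ifP => dvd.
  rewrite (eq_bigr (fun _ => 1)) ?sumr_const ?card_ord // => j _.
  by case/dvdnP: dvd => q ->; rewrite -exprM omega_mod // mulnAC ?modnMl ?modnMr expr0.
have ne : omega R p ^+ m != 1.
  rewrite omega_mod // omegaX_neq1 // ltn_pmod // andbT lt0n.
  by rewrite -/(dvdn p m) dvd.
have ne' : omega R p ^+ m - 1 != 0 by rewrite subr_eq0.
apply/eqP; rewrite -(inj_eq (mulfI ne')) mulr0 -subrX1 -exprM mulnC exprM omegap //.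
by rewrite expr1n subrr.
Qed.
End Roots.

Section Fourier.
Variable R : realType.
Local Notation C := R[i].
Local Notation w p := (omega R p).

Lemma dftE m n p (T : tensor C m n p) k i j :
  dft T k i j = \sum_(l < p) w p ^+ (k * l) * T l i j.
Proof. by rewrite /dft summxE; apply: eq_bigr => l _; rewrite mxE. Qed.

Lemma idftE m n p (H : tensor C m n p) l i j :
  idft H l i j = p%:R^-1 * \sum_(k < p) (w p)^-1 ^+ (k * l) * H k i j.
Proof. by rewrite /idft mxE summxE; congr (_ * _); apply: eq_bigr => k _; rewrite mxE. Qed.

Lemma dvd_lemma p k m : (k < p)%N -> (m < p)%N -> (p %| k + (p.-1) * m)%N = (k == m).
Proof.
move=> kp mp.
have p0 : (0 < p)%N by apply: leq_ltn_trans kp.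
have e : ((k + p.-1 * m) %% p == 0 %% p)%N = ((k + p.-1 * m) + m == 0 + m %[mod p])%N.
  by rewrite eqn_modDr.
rewrite mod0n in e; rewrite /dvdn e add0n -addnA -{2}(mul1n m) -mulnDl addn1 prednK //.
by rewrite -modnDmr ?modnMl ?modnMr addn0 !modn_small.
Qed.

Lemma omega_unit p : (0 < p)%N -> w p * w p ^+ p.-1 = 1.
Proof. by move=> p0; rewrite -exprS prednK // omegap. Qed.

Lemma omega_inv p : (0 < p)%N -> (w p)^-1 = w p ^+ p.-1.
Proof.
move=> p0; have h := omega_unit p0.
have nz : w p != 0 by apply/eqP => e; move: h; rewrite e mul0r => /eqP; rewrite eq_sym oner_eq0.
by apply: (mulfI nz); rewrite h divff.
Qed.

Lemma conj_omega p : (0 < p)%N -> (w p)^* = w p ^+ p.-1.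
Proof.
move=> p0; rewrite -omega_inv //.
have -> : (w p)^* = ((w p)^*)%C by [].
have nz : w p != 0 by apply/eqP => e; have := omega_unit p0; rewrite e mul0r => /eqP; rewrite eq_sym oner_eq0.
apply: (mulfI nz); rewrite divff //.
rewrite /omega /= mulc_def; apply/eqP; rewrite eq_complex /=; apply/andP; split; apply/eqP.
  set t := 2 * pi / p%:R; rewrite -[RHS](cos2Dsin2 t); ring.
ring.
Qed.


Lemma ord_gt0 p (k : 'I_p) : (0 < p)%N.
Proof. exact: leq_ltn_trans (leq0n k) (ltn_ord k). Qed.

Lemma dft_idft m n p (H : tensor C m n p) k : dft (idft H) k = H k.
Proof.
have p0 := ord_gt0 k.
apply/matrixP => i j; rewrite dftE.
transitivity (\sum_(l < p) \sum_(q < p) p%:R^-1 * ((w p ^+ (k + p.-1 * q)) ^+ l * H q i j)).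
  apply: eq_bigr => l _; rewrite idftE mulr_sumr mulr_sumr; apply: eq_bigr => q _.
  by rewrite omega_inv // -!exprM mulnDl exprD -mulnA; ring.
rewrite exchange_big /= (bigD1 k) //= [X in _ + X]big1 => [|q qk].
  rewrite -mulr_sumr -mulr_suml sum_omega // dvd_lemma // eqxx addr0 mulrA mulVf ?mul1r //.
  by rewrite pnatr_eq0 -lt0n.
rewrite -mulr_sumr -mulr_suml sum_omega // dvd_lemma // ifF ?mul0r ?mulr0 //; apply/negbTE; rewrite eq_sym; exact: qk.
Qed.


Lemma parseval1 p (t : 'I_p -> C) :
  \sum_(k < p) (\sum_(l < p) w p ^+ (k * l) * t l)^* * (\sum_(l < p) w p ^+ (k * l) * t l)
  = p%:R * \sum_(l < p) (t l)^* * t l.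
Proof.
case: p t => [|p'] t; first by rewrite !big_ord0 mulr0.
set p := p'.+1; have p0 : (0 < p)%N by [].
transitivity (\sum_(k < p) \sum_(l < p) \sum_(l' < p)
   (t l)^* * t l' * (w p ^+ (l' + p.-1 * l)) ^+ k).
  apply: eq_bigr => k _; rewrite rmorph_sum mulr_suml; apply: eq_bigr => l _.
  rewrite mulr_sumr; apply: eq_bigr => l' _.
  rewrite rmorphM rmorphXn /= conj_omega // -!exprM.
  have -> : ((l' + p.-1 * l) * k = k * l' + p.-1 * (k * l))%N by ring.
  rewrite exprD; ring.
rewrite exchange_big mulr_sumr; apply: eq_bigr => l _ /=.
rewrite exchange_big (bigD1 l) //= [X in _ + X]big1 => [|l' ll].
  by rewrite -mulr_sumr sum_omega // dvd_lemma // eqxx addr0 mulrC.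
by rewrite -mulr_sumr sum_omega // dvd_lemma // ifF ?mulr0 //; apply/negbTE; exact: ll.
Qed.

End Fourier.

Section Dot.
Variable R : realType.
Local Notation C := R[i].

Definition adj m n (M : 'M[C]_(m, n)) : 'M[C]_(n, m) := \matrix_(i, j) (M j i)^*.
Definition dotm m n (X Y : 'M[C]_(m, n)) : C := \sum_i \sum_j (X i j)^* * Y i j.

Variables m n : nat.
Implicit Types X Y Z : 'M[C]_(m, n).

Lemma dotmDr X Y Z : dotm X (Y + Z) = dotm X Y + dotm X Z.
Proof.
rewrite /dotm -big_split; apply: eq_bigr => i _; rewrite -big_split; apply: eq_bigr => j _.
by rewrite mxE mulrDr.
Qed.

Lemma dotmZr X c Y : dotm X (c *: Y) = c * dotm X Y.
Proof.
rewrite /dotm mulr_sumr; apply: eq_bigr => i _; rewrite mulr_sumr; apply: eq_bigr => j _.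
by rewrite mxE mulrCA.
Qed.

Lemma dotm0r X : dotm X 0 = 0.
Proof. by rewrite -(scale0r 0) dotmZr mul0r. Qed.

Lemma dotmNr X Y : dotm X (- Y) = - dotm X Y.
Proof. by rewrite -scaleN1r dotmZr mulN1r. Qed.

Lemma dotmBr X Y Z : dotm X (Y - Z) = dotm X Y - dotm X Z.
Proof. by rewrite dotmDr dotmNr. Qed.

Lemma dotm_sumr X I (r : seq I) (P : pred I) (F : I -> 'M[C]_(m, n)) :
  dotm X (\sum_(q <- r | P q) F q) = \sum_(q <- r | P q) dotm X (F q).
Proof.
elim/big_rec2: _ => [|q y1 y2 _ <-]; first exact: dotm0r.
by rewrite dotmDr.
Qed.

Lemma dotmC X Y : dotm X Y = (dotm Y X)^*.
Proof.
rewrite /dotm rmorph_sum; apply: eq_bigr => i _; rewrite rmorph_sum; apply: eq_bigr => j _.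
by rewrite rmorphM /= conjCK mulrC.
Qed.

Lemma dotmZl X c Y : dotm (c *: X) Y = c^* * dotm X Y.
Proof. by rewrite dotmC dotmZr rmorphM /= -dotmC. Qed.

Lemma dotmDl X Y Z : dotm (X + Y) Z = dotm X Z + dotm Y Z.
Proof. by rewrite dotmC dotmDr rmorphD /= -!dotmC. Qed.

Lemma dotm_suml Y I (r : seq I) (P : pred I) (F : I -> 'M[C]_(m, n)) :
  dotm (\sum_(q <- r | P q) F q) Y = \sum_(q <- r | P q) dotm (F q) Y.
Proof. by rewrite dotmC dotm_sumr rmorph_sum /=; apply: eq_bigr => q _; rewrite -dotmC. Qed.

End Dot.

Lemma dotm_adj (R : realType) m n p (A : 'M[R[i]]_(m, n)) (X : 'M[R[i]]_(n, p)) Y :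
  dotm (A *m X) Y = dotm X (adj A *m Y).
Proof.
rewrite /dotm.
transitivity (\sum_i \sum_j \sum_r (A i r)^* * (X r j)^* * Y i j).
  apply: eq_bigr => i _; apply: eq_bigr => j _; rewrite mxE rmorph_sum mulr_suml.
  by apply: eq_bigr => r _; rewrite rmorphM.
under eq_bigr do rewrite exchange_big /=.
rewrite exchange_big /=; apply: eq_bigr => r _; rewrite exchange_big /=.
apply: eq_bigr => j _; rewrite mxE mulr_sumr; apply: eq_bigr => i _.
by rewrite mxE mulrA (mulrC (A i r)^*).
Qed.

Lemma conjR (R : realType) (r : R) : ((r%:C)%C : R[i])^* = (r%:C)%C.
Proof. exact: conjc_real. Qed.

Lemma realC_eq0 (R : realType) (r : R) : (((r%:C)%C : R[i]) == 0) = (r == 0).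
Proof. by rewrite eq_complex /= eqxx andbT. Qed.

Lemma dotm_adjr (R : realType) m n p (A : 'M[R[i]]_(m, n)) (X : 'M[R[i]]_(m, p)) Y :
  dotm X (A *m Y) = dotm (adj A *m X) Y.
Proof. by rewrite dotmC dotm_adj -dotmC. Qed.

Section GKAbstract.
Variable R : realType.
Local Notation C := R[i].
Local Notation rc r := ((r%:C)%C : C).
Variables (n1 n2 s k : nat) (A : 'M[C]_(n1, n2)).
Variables (U : nat -> 'M[C]_(n1, s)) (V : nat -> 'M[C]_(n2, s)) (a b : nat -> R).
Hypothesis hV0 : V 0 = 0.
Hypothesis hUn : forall j, (1 <= j <= k.+1)%N -> dotm (U j) (U j) = 1.
Hypothesis hVn : forall j, (1 <= j <= k)%N -> dotm (V j) (V j) = 1.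
Hypothesis hVr : forall j, (1 <= j <= k)%N ->
  (rc (b j)) *: V j = adj A *m U j - (rc (a j)) *: V j.-1.
Hypothesis hUr : forall j, (1 <= j <= k)%N ->
  (rc (a j.+1)) *: U j.+1 = A *m V j - (rc (b j)) *: U j.
Hypothesis hb : forall j, (1 <= j <= k)%N -> b j != 0.
Hypothesis ha : forall j, (1 <= j <= k)%N -> a j.+1 != 0.

Lemma AV j : (1 <= j <= k)%N -> A *m V j = (rc (b j)) *: U j + (rc (a j.+1)) *: U j.+1.
Proof. by move=> hj; rewrite hUr // addrC subrK. Qed.

Lemma AHU j : (1 <= j <= k)%N -> adj A *m U j = (rc (b j)) *: V j + (rc (a j)) *: V j.-1.
Proof. by move=> hj; rewrite hVr // subrK. Qed.

Lemma dotm0l_V j : dotm (V 0) (V j) = 0.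
Proof. by rewrite hV0 dotmC -(scale0r 0) dotmZr mul0r conjC0. Qed.

Lemma ortho_step n : (forall i j, (1 <= i)%N -> (i < j <= n)%N ->
   ((j <= k.+1)%N -> dotm (U i) (U j) = 0) /\ ((j <= k)%N -> dotm (V i) (V j) = 0)).
Proof.
elim: n => [|n IH] i j i1 /andP[ij jn]; first lia.
case: (ltngtP j n.+1) => [jlt|jgt|ejn]; first by apply: IH => //; lia.
  lia.
subst j.
have IHV : forall i', (i' < n)%N -> (n <= k)%N -> dotm (V i') (V n) = 0.
  move=> i' i'n nk; case: i' i'n => [|i'] i'n; first exact: dotm0l_V.
  by have [_ h] := IH i'.+1 n erefl ltac:(lia); apply: h.
have IHU : forall i', (1 <= i' < n)%N -> (n <= k.+1)%N -> dotm (U i') (U n) = 0.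
  move=> i' i'n nk; have [h _] := IH i' n ltac:(lia) ltac:(lia); exact: h.
have hn1 : (1 <= n)%N by lia.
have hU : forall i', (1 <= i' < n.+1)%N -> (n.+1 <= k.+1)%N -> dotm (U i') (U n.+1) = 0.
  move=> i' /andP[i'1 i'n] nk; have nk' : (1 <= n <= k)%N by lia.
  have := ha nk'; rewrite -realC_eq0 => anz.
  apply: (mulfI anz); rewrite mulr0 -dotmZr hUr // dotmBr dotm_adjr.
  have ik : (1 <= i' <= k)%N by lia.
  rewrite AHU // dotmDl !dotmZl !conjR dotmZr.
  case: (ltngtP i' n) => [ilt|igt|->]; last first.
  - rewrite hVn // hUn; last lia.
    by rewrite IHV ?mulr0 ?addr0 ?subrr // ?ltn_predL //; lia.
  - lia.
  - have pi : (i'.-1 < n)%N by apply: leq_ltn_trans ilt; apply: leq_pred.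
    by rewrite IHV ?IHU ?IHV ?mulr0 ?addr0 ?subrr //; lia.
split; first by move=> nk; apply: hU => //; lia.
move=> nk; have nk' : (1 <= n.+1 <= k)%N by lia.
have := hb nk'; rewrite -realC_eq0 => bnz.
apply: (mulfI bnz); rewrite mulr0 -dotmZr hVr // dotmBr -dotm_adj.
have ik : (1 <= i <= k)%N by lia.
have hUi : dotm (U i) (U n.+1) = 0 by apply: hU; lia.
rewrite AV // dotmDl !dotmZl !conjR dotmZr /= hUi.
case: (ltngtP i n) => [ilt|igt|ein].
- by rewrite (hU i.+1) ?IHV ?mulr0 ?addr0 ?subrr //; lia.
- lia.
- by rewrite ein hUn ?hVn ?mulr0 ?mulr1 ?add0r ?subrr //; lia.
Qed.

Lemma orthoU i j : (1 <= i <= k.+1)%N -> (1 <= j <= k.+1)%N ->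
  dotm (U i) (U j) = (i == j)%:R.
Proof.
move=> hi hj; case: (ltngtP i j) => [ij|ji|->]; last by rewrite hUn.
  by have [h _] := ortho_step (n := j) (i := i) (j := j) ltac:(lia) ltac:(lia); rewrite h //; lia.
have [h _] := ortho_step (n := i) (i := j) (j := i) ltac:(lia) ltac:(lia).
by rewrite dotmC h ?conjC0 //; lia.
Qed.


Variables (Bh : 'M[C]_(n1, s)) (y : 'I_k -> C).
Hypothesis hB : rc (a 1) *: U 1 = Bh.

Definition Cf (i : 'I_k.+1) (j : 'I_k) : C :=
  if val i == val j then rc (b j.+1) else if val i == j.+1 then rc (a j.+2) else 0.
Definition cvec (i : 'I_k.+1) : C :=
  (val i == 0)%:R * rc (a 1) - \sum_(j < k) Cf i j * y j.

Lemma Cf_sum (j : 'I_k) :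
  \sum_(i < k.+1) Cf i j *: U i.+1 = rc (b j.+1) *: U j.+1 + rc (a j.+2) *: U j.+2.
Proof.
have hj1 : (j < k.+1)%N by apply: ltnW; rewrite ltnS.
have hj2 : (j.+1 < k.+1)%N by rewrite ltnS.
rewrite (bigD1 (Ordinal hj1)) //= (bigD1 (Ordinal hj2)) /=; last first.
  by rewrite -val_eqE /= eqn_leq ltnn.
rewrite big1 ?addr0 => [|i /andP[i2 i1]].
  by rewrite /Cf /= eqxx eqn_leq ltnn /= eqxx.
rewrite /Cf ifF ?ifF ?scale0r //.
  by apply/negbTE; move: i2; rewrite -val_eqE.
by apply/negbTE; move: i1; rewrite -val_eqE.
Qed.

Lemma resid_eq :
  Bh - A *m (\sum_(j < k) y j *: V j.+1) = \sum_(i < k.+1) cvec i *: U i.+1.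
Proof.
rewrite /cvec.
under [RHS]eq_bigr do rewrite scalerBl.
rewrite sumrB big_ord_recl /= mul1r [in RHS]big1 ?addr0 => [|i _]; last first.
  by rewrite mul0r scale0r.
rewrite hB; congr (_ - _).
under [RHS]eq_bigr do rewrite scaler_suml.
rewrite exchange_big /= mulmx_sumr; apply: eq_bigr => j _.
rewrite -scalemxAr AV; last by apply/andP; split => //; apply: ltn_ord.
rewrite -Cf_sum scaler_sumr; apply: eq_bigr => i _.
by rewrite scalerA mulrC.
Qed.

Lemma resid_norm :
  let X := \sum_(j < k) y j *: V j.+1 in
  dotm (Bh - A *m X) (Bh - A *m X) = \sum_(i < k.+1) (cvec i)^* * cvec i.
Proof.
move=> X; rewrite /X resid_eq dotm_suml; apply: eq_bigr => i _.
rewrite dotmZl dotm_sumr; congr (_ * _).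
rewrite (bigD1 i) //= big1 ?addr0 => [|j ji].
  by rewrite dotmZr orthoU ?eqxx ?mulr1 //; apply/andP; split => //; apply: ltn_ord.
rewrite dotmZr orthoU; first by rewrite eqSS eq_sym; move: ji; rewrite -val_eqE => /negbTE ->; rewrite mulr0.
  by apply/andP; split => //; apply: ltn_ord.
by apply/andP; split => //; apply: ltn_ord.
Qed.

End GKAbstract.

Section TDFT.
Variable R : realType.
Local Notation C := R[i].
Local Notation w p := (omega R p).

Lemma dft_tprod m n q p (X : tensor C m n p) (Y : tensor C n q p) k :
  dft (tprod X Y) k = dft X k *m dft Y k.
Proof. exact: dft_idft. Qed.

Lemma dft_taddsub m n p (X Y : tensor C m n p) k :
  dft (taddsub X Y) k = dft X k - dft Y k.
Proof. by rewrite /dft /taddsub -sumrB; apply: eq_bigr => j _; rewrite scalerBr. Qed.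

Lemma dft_tkron m1 n1 m2 n2 p (X : tensor C m1 n1 p) (Y : tensor C m2 n2 p) k :
  dft (tkron X Y) k = dft X k *t dft Y k.
Proof. exact: dft_idft. Qed.

Lemma dft_norm_tube m n p (W : tensor C m n p) k :
  dft (norm_tube W) k = ((frobc (dft W k))%:C)%C%:M.
Proof. exact: dft_idft. Qed.

Lemma dft_norm_Q m n p (W : tensor C m n p) k :
  dft (norm_Q W) k = ((frobc (dft W k))^-1%:C)%C *: dft W k.
Proof. exact: dft_idft. Qed.

Lemma dft_tscale m n p (a : tensor C 1 1 p) (W : tensor C m n p) k :
  dft (tscale a W) k = dft a k 0 0 *: dft W k.
Proof.
apply/matrixP => i j; rewrite dftE [RHS]mxE.
under eq_bigr do rewrite mxE.
rewrite -(dftE (tprod a (tube_of W i j))) dft_tprod mxE big_ord1; congr (_ * _).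
by rewrite !dftE; apply: eq_bigr => l _; rewrite mxE.
Qed.

Lemma rev_sliceK p : involutive (@rev_slice p).
Proof.
move=> j; apply: val_inj => /=.
have jp := ltn_ord j.
case: (posnP j) => [j0|j0].
  by rewrite j0 subn0 modnn subn0 modnn.
rewrite (@modn_small (p - j)); last by lia.
by rewrite subKn ?modn_small //; apply: ltnW.
Qed.

Lemma omega_rev p k (l : 'I_p) : w p ^+ (k * rev_slice l) = w p ^+ (p.-1 * (k * l)).
Proof.
have p0 := ord_gt0 l.
rewrite omega_mod // [RHS]omega_mod //; congr (_ ^+ _); apply/eqP.
rewrite -(eqn_modDr (k * l)).
have -> : (k * rev_slice l + k * l = k * ((p - l) %% p + l))%N by rewrite mulnDr.
have -> : (p.-1 * (k * l) + k * l = p * (k * l))%N.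
  by rewrite -[X in (_ = X * _)%N](prednK p0) mulSn addnC.
rewrite ?modnMl ?modnMr -modnMmr modnDml subnK; last exact: ltnW.
by rewrite modnn muln0 mod0n.
Qed.

Lemma dft_ttr m n p (A : tensor R m n p) k :
  dft (ttr (tcplx A)) k = adj (dft (tcplx A) k).
Proof.
have p0 := ord_gt0 k.
apply/matrixP => i j; rewrite dftE [RHS]mxE dftE rmorph_sum /=.
rewrite (reindex_inj (inv_inj (@rev_sliceK p))) /=; apply: eq_bigr => l _.
rewrite /ttr rev_sliceK mxE omega_rev rmorphM /= rmorphXn /= conj_omega // -exprM.
by rewrite /tcplx !mxE conjR.
Qed.

Lemma dft_tid s p k : dft (@tid R s p) k = 1%:M.
Proof.
have p0 := ord_gt0 k.
rewrite /dft (bigD1 (Ordinal p0)) //= big1 ?addr0 => [|j j0].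
  by rewrite /tid /= muln0 expr0 scale1r.
by rewrite /tid ifF ?scaler0 //; apply/negbTE; move: j0; rewrite -val_eqE.
Qed.

Lemma dft_tube_e p k : dft (@tube_e R p) k = 1.
Proof.
have p0 := ord_gt0 k.
rewrite /dft (bigD1 (Ordinal p0)) //= big1 ?addr0 => [|j j0].
  by rewrite /tube_e /= muln0 expr0 scale1r.
by rewrite /tube_e ifF ?scaler0 //; apply/negbTE; move: j0; rewrite -val_eqE.
Qed.

Lemma dft_E1 q p l : dft (E1 (R := R) (n3 := p) q) l = \matrix_(i, j) (val i == 0)%:R.
Proof.
apply/matrixP => i j; rewrite dftE !mxE.
under eq_bigr do rewrite mxE.
case: (val i == 0); last by rewrite big1 // => r _; rewrite mulr0.
have := dft_tube_e l; move/matrixP => /(_ 0 0); rewrite dftE !mxE => <-.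
by apply: eq_bigr => r _; rewrite ?mxE.
Qed.

End TDFT.

Section Frob.
Variable R : realType.
Local Notation C := R[i].
Local Notation rc r := ((r%:C)%C : C).

Lemma abs2C (z : C) : rc (abs2 z) = z^* * z.
Proof.
have -> : z^* = (z^*)%C by [].
case: z => x y; rewrite /abs2 /= mulc_def; apply/eqP; rewrite eq_complex /=.
by apply/andP; split; apply/eqP; ring.
Qed.

Lemma abs2_ge0 (z : C) : 0 <= abs2 z.
Proof. by rewrite /abs2 addr_ge0 // sqr_ge0. Qed.

Lemma frobc_ge0 m n (M : 'M[C]_(m, n)) : 0 <= frobc M.
Proof. exact: sqrtr_ge0. Qed.

Lemma frobc_sq m n (M : 'M[C]_(m, n)) :
  frobc M ^+ 2 = \sum_i \sum_j abs2 (M i j).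
Proof.
rewrite /frobc sqr_sqrtr //; apply: sumr_ge0 => i _; apply: sumr_ge0 => j _.
exact: abs2_ge0.
Qed.

Lemma frobc_dot m n (M : 'M[C]_(m, n)) : rc (frobc M ^+ 2) = dotm M M.
Proof.
rewrite frobc_sq rmorph_sum /dotm /=; apply: eq_bigr => i _.
by rewrite rmorph_sum /=; apply: eq_bigr => j _; rewrite abs2C.
Qed.

Lemma parseval m n p (T : tensor C m n p) :
  \sum_(k < p) frobc (dft T k) ^+ 2 = p%:R * \sum_(l < p) \sum_i \sum_j abs2 (T l i j).
Proof.
apply: (@complexI R); rewrite rmorph_sum rmorphM rmorph_nat /=.
under eq_bigr do rewrite frobc_dot /dotm.
rewrite rmorph_sum /=.
under [in RHS]eq_bigr do rewrite rmorph_sum /=.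
under [in RHS]eq_bigr do under eq_bigr do rewrite rmorph_sum /=.
rewrite exchange_big /= [in RHS]exchange_big /=.
rewrite mulr_sumr; apply: eq_bigr => i _.
rewrite exchange_big /= [in RHS]exchange_big /=.
rewrite mulr_sumr; apply: eq_bigr => j _.
under eq_bigr do rewrite dftE.
rewrite parseval1; congr (_ * _); apply: eq_bigr => l _.
by rewrite abs2C.
Qed.

Lemma normQ_dot m n (M : 'M[C]_(m, n)) : frobc M != 0 ->
  dotm (rc (frobc M)^-1 *: M) (rc (frobc M)^-1 *: M) = 1.
Proof.
move=> nz; rewrite dotmZl dotmZr conjR -frobc_dot mulrA -!rmorphM /=.
by rewrite -expr2 -exprMn mulVf // expr1n.
Qed.

Lemma normQ_scale m n (M : 'M[C]_(m, n)) : frobc M != 0 ->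
  rc (frobc M) *: (rc (frobc M)^-1 *: M) = M.
Proof. by move=> nz; rewrite scalerA -rmorphM /= divff // scale1r. Qed.

End Frob.

Section Slice.
Variable R : realType.
Local Notation C := R[i].
Local Notation rc r := ((r%:C)%C : C).
Variables (n1 n2 n3 s k : nat) (A : tensor R n1 n2 n3) (B : tensor R n1 s n3).
Local Notation Ac := (tcplx A).
Local Notation Bc := (tcplx B).

Definition Wa j : tensor C n1 s n3 :=
  match j with 0 | 1 => Bc | n.+2 => GK_Utilde Ac Bc n.+1 end.

Lemma GK_a_S j : GK_a Ac Bc j.+1 = norm_tube (Wa j.+1).
Proof. by case: j. Qed.
Lemma GK_U_S j : GK_U Ac Bc j.+1 = norm_Q (Wa j.+1).
Proof. by case: j. Qed.
Lemma GK_V_S j : GK_V Ac Bc j.+1 = norm_Q (GK_Vtilde Ac Bc j.+1).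
Proof. by []. Qed.
Lemma GK_b_S j : GK_b Ac Bc j.+1 = norm_tube (GK_Vtilde Ac Bc j.+1).
Proof. by []. Qed.
Lemma GK_V_0 : GK_V Ac Bc 0 = fun _ => 0.
Proof. by []. Qed.
Lemma GK_Vtilde_S j : GK_Vtilde Ac Bc j.+1 =
  taddsub (tprod (ttr Ac) (GK_U Ac Bc j.+1)) (tscale (GK_a Ac Bc j.+1) (GK_V Ac Bc j)).
Proof. by []. Qed.
Lemma GK_Utilde_S j : GK_Utilde Ac Bc j.+1 =
  taddsub (tprod Ac (GK_V Ac Bc j.+1)) (tscale (GK_b Ac Bc j.+1) (GK_U Ac Bc j.+1)).
Proof. by []. Qed.


Lemma dft_zero m n p (l : 'I_p) : dft (fun _ => 0 : 'M[C]_(m, n)) l = 0.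
Proof. by rewrite /dft big1 // => j _; rewrite scaler0. Qed.

Lemma scalar_mx00 (x : C) : (x%:M : 'M[C]_1) 0 0 = x.
Proof. by rewrite mxE mulr1n. Qed.

Variable l : 'I_n3.
Hypothesis nb : gk_no_breakdown Ac Bc k.

Definition Uh j := dft (GK_U Ac Bc j) l.
Definition Vh j := dft (GK_V Ac Bc j) l.
Definition ar j := frobc (dft (Wa j) l).
Definition br j := frobc (dft (GK_Vtilde Ac Bc j) l).
Definition Ah := dft Ac l.

Lemma ar_nz j : (1 <= j <= k.+1)%N -> ar j != 0.
Proof.
case: j => [|[|n]] //= hj; first exact: nb.1 l.
have hn : (1 <= n.+1 <= k)%N by lia.
exact: ((nb.2 n.+1 hn) l).2.
Qed.

Lemma br_nz j : (1 <= j <= k)%N -> br j != 0.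
Proof. by move=> hj; exact: ((nb.2 j hj) l).1. Qed.

Lemma a_tube j : dft (GK_a Ac Bc j) l 0 0 = rc (ar j).
Proof. by case: j => [|j]; rewrite ?GK_a_S dft_norm_tube scalar_mx00. Qed.

Lemma b_tube j : dft (GK_b Ac Bc j.+1) l 0 0 = rc (br j.+1).
Proof. by rewrite GK_b_S dft_norm_tube scalar_mx00. Qed.

Lemma hV0 : Vh 0 = 0.
Proof. exact: dft_zero. Qed.

Lemma Uh_S j : Uh j.+1 = rc (ar j.+1)^-1 *: dft (Wa j.+1) l.
Proof. by rewrite /Uh GK_U_S dft_norm_Q. Qed.

Lemma Vh_S j : Vh j.+1 = rc (br j.+1)^-1 *: dft (GK_Vtilde Ac Bc j.+1) l.
Proof. by rewrite /Vh GK_V_S dft_norm_Q. Qed.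

Lemma hUn j : (1 <= j <= k.+1)%N -> dotm (Uh j) (Uh j) = 1.
Proof. by case: j => [//|j] hj; rewrite Uh_S normQ_dot //; apply: ar_nz. Qed.

Lemma hVn j : (1 <= j <= k)%N -> dotm (Vh j) (Vh j) = 1.
Proof. by case: j => [//|j] hj; rewrite Vh_S normQ_dot //; apply: br_nz. Qed.

Lemma hVr j : (1 <= j <= k)%N ->
  rc (br j) *: Vh j = adj Ah *m Uh j - rc (ar j) *: Vh j.-1.
Proof.
case: j => [//|j] hj; rewrite Vh_S normQ_scale; last exact: br_nz.
by rewrite GK_Vtilde_S dft_taddsub dft_tprod dft_ttr dft_tscale a_tube.
Qed.

Lemma hUr j : (1 <= j <= k)%N ->
  rc (ar j.+1) *: Uh j.+1 = Ah *m Vh j - rc (br j) *: Uh j.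
Proof.
case: j => [//|j] hj; rewrite Uh_S normQ_scale; last by apply: ar_nz; lia.
by rewrite /= GK_Utilde_S dft_taddsub dft_tprod dft_tscale b_tube.
Qed.

Lemma hb j : (1 <= j <= k)%N -> br j != 0.
Proof. exact: br_nz. Qed.

Lemma ha j : (1 <= j <= k)%N -> ar j.+1 != 0.
Proof. by move=> hj; apply: ar_nz; lia. Qed.

Lemma hB : rc (ar 1) *: Uh 1 = dft Bc l.
Proof. by rewrite Uh_S normQ_scale //; apply: ar_nz. Qed.

End Slice.

Section Final.
Variable R : realType.
Local Notation C := R[i].
Local Notation rc r := ((r%:C)%C : C).

Lemma dft_cast m n m' n' p (em : m = m') (en : n = n') (T : tensor C m n p) l :
  dft (tens_cast em en T) l = castmx (em, en) (dft T l).
Proof.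
apply/matrixP => i j; rewrite castmxE !dftE; apply: eq_bigr => r _.
by rewrite /tens_cast castmxE.
Qed.

Variables (n1 n2 n3 s k : nat) (A : tensor R n1 n2 n3) (B : tensor R n1 s n3).
Variable (Y : tensor R k 1 n3).
Local Notation Ac := (tcplx A).
Local Notation Bc := (tcplx B).

Lemma dft_Vcat l r q : dft (GK_Vcat Ac Bc k) l r q =
  dft (GK_V Ac Bc (mxtens_unindex q).1.+1) l r (mxtens_unindex q).2.
Proof. by rewrite !dftE; apply: eq_bigr => t _; rewrite mxE. Qed.

Lemma dft_Xk l :
  dft (tens_cast erefl (mul1n s) (tprod (GK_Vcat Ac Bc k) (tkron (tcplx Y) (tid s)))) l
  = \sum_(j < k) dft (tcplx Y) l j 0 *: Vh A B l j.+1.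
Proof.
apply/matrixP => r c; rewrite dft_cast castmxE dft_tprod dft_tkron dft_tid mxE summxE.
under eq_bigr do rewrite dft_Vcat mxE.
under [RHS]eq_bigr do rewrite mxE.
set c' := cast_ord _ c.
rewrite (ord1 (mxtens_unindex c').1).
have -> : (mxtens_unindex c').2 = c by apply: val_inj; rewrite /= modn_small.
rewrite cast_ord_id.
rewrite (reindex (@mxtens_index k s)); last first.
  by exists (@mxtens_unindex k s) => x _; rewrite (mxtens_indexK, mxtens_unindexK).
under eq_bigr do rewrite mxtens_indexK.
rewrite -(pair_bigA _ (fun (j : 'I_k) (t : 'I_s) =>
  dft (GK_V Ac Bc j.+1) l r t * (dft (tcplx Y) l j 0 * 1%:M t c))) /=.
apply: eq_bigr => j _.
rewrite (bigD1 c) //= big1 ?addr0 => [|t tc]; last by rewrite mxE (negbTE tc) mulr0n !mulr0.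
by rewrite mxE eqxx mulr1n mulr1 mulrC.
Qed.


Lemma dft_Ctilde l i j : dft (GK_Ctilde Ac Bc k) l i j =
  Cf (ar A B l) (br A B l) i j.
Proof.
rewrite dftE /Cf; under eq_bigr do rewrite mxE.
case: eqP => _.
  by rewrite -(b_tube A B l j); rewrite dftE; apply: eq_bigr => r _.
case: eqP => _; last by rewrite big1 // => r _; rewrite mulr0.
by rewrite -(a_tube A B l j.+2) dftE; apply: eq_bigr => r _.
Qed.

Hypothesis nb : gk_no_breakdown Ac Bc k.
Let Xk : tensor C n2 s n3 :=
  tens_cast erefl (mul1n s) (tprod (GK_Vcat Ac Bc k) (tkron (tcplx Y) (tid s))).
Let Res := taddsub Bc (tprod Ac Xk).
Let Z := taddsub (tprod (E1 k) (GK_a Ac Bc 1)) (tprod (GK_Ctilde Ac Bc k) (tcplx Y)).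

Lemma slice_eq l : frobc (dft Res l) ^+ 2 = frobc (dft Z l) ^+ 2.
Proof.
apply: (@complexI R); rewrite !frobc_dot.
have := resid_norm (hV0 A B l) (hUn l nb) (hVn l nb) (hVr l nb)
  (hUr l nb) (hb l nb) (ha l nb) (fun j => dft (tcplx Y) l j 0) (hB l nb).
rewrite /Res dft_taddsub dft_tprod /Xk dft_Xk -/(Ah A l) /= => ->.
rewrite /dotm; apply: eq_bigr => i _; rewrite big_ord1.
have -> : dft Z l i 0 = cvec (ar A B l) (br A B l) (fun j => dft (tcplx Y) l j 0) i.
  rewrite /Z dft_taddsub !dft_tprod mxE mxE big_ord1 dft_E1 mxE a_tube mxE /cvec.
  by congr (_ - _); rewrite mxE; apply: eq_bigr => j _; rewrite dft_Ctilde.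
by [].
Qed.

End Final.
Unset Implicit Arguments.

Theorem proposition14 (R : realType) (n1 n2 n3 s k : nat)
  (A : tensor R n1 n2 n3) (B : tensor R n1 s n3) (Y : tensor R k 1 n3) :
  gk_no_breakdown (tcplx A) (tcplx B) k ->
  let Ac := tcplx A in let Bc := tcplx B in
  let Xk : tensor R[i] n2 s n3 :=
    tens_cast erefl (mul1n s)
      (tprod (GK_Vcat Ac Bc k) (tkron (tcplx Y) (tid s))) in
  tfrob (taddsub Bc (tprod Ac Xk)) =
  tl2 (taddsub (tprod (E1 k) (GK_a Ac Bc 1))
               (tprod (GK_Ctilde Ac Bc k) (tcplx Y))).
Proof.
move=> nb /=.
rewrite /tl2 (eq_bigr _ (fun l _ => esym (slice_eq Y nb l))) parseval.
rewrite /tfrob.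
case: n3 A B Y nb => [|p] A B Y nb.
  by rewrite !big_ord0 mulr0 sqrtr0 mulr0.
rewrite sqrtrM ?ler0n // mulKf //.
by rewrite sqrtr_eq0 -ltNge ltr0n.
Qed.
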